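(* Let $I\subset[0,1]$ be a set satisfying the DCC and let $J_0\subset[0,1]$ be a finite set. Then the set $I_0=\{c\in I\mid \frac{m-1+f+kc}{m}\in J_0\text{ for some }k,m\in\mathbb{N}\text{ and }f\in D(I)\}$ is finite.
   Context: $\mathbb{N}$ denotes positive integers. $I_+=\{0\}\cup\{j\in[0,1]\mid j=\sum_{p=1}^l i_p,\ i_p\in I\}$ and $D(I)=\{a\le1\mid a=\frac{m-1+f}{m},\ m\in\mathbb{N},\ f\in I_+\}$. DCC: no infinite strictly decreasing sequence. *)

(* Defs.v *)
From Stdlib Require Import Reals List.
Open Scope R_scope.

Definition DCC (A : R -> Prop) : Prop :=
  ~ (exists u : nat -> R, (forall n, A (u n)) /\ (forall n, u (S n) < u n)).

Definition finite_set (A : R -> Prop) : Prop :=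
  exists l : list R, forall x, A x -> In x l.

Definition Iplus (I : R -> Prop) (j : R) : Prop :=
  j = 0 \/
  (0 <= j <= 1 /\
   exists l : list R, l <> nil /\ Forall I l /\ j = fold_right Rplus 0 l).

Definition DI (I : R -> Prop) (a : R) : Prop :=
  a <= 1 /\
  exists (m : nat) (f : R), (1 <= m)%nat /\ Iplus I f /\
    a = (INR m - 1 + f) / INR m.

(* Main.v *)
Require Import Defs.
From Stdlib Require Import Reals List Lra Lia Arith Classical ClassicalEpsilon.
Open Scope R_scope.

Definition HasMin (A : R -> Prop) := forall T : R -> Prop, (forall x, T x -> A x) ->
  (exists x, T x) -> exists x, T x /\ forall y, T y -> x <= y.
Definition HasMax (A : R -> Prop) := forall T : R -> Prop, (forall x, T x -> A x) ->
  (exists x, T x) -> exists x, T x /\ forall y, T y -> y <= x.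

Lemma DCC_sub (A B : R -> Prop) : (forall x, B x -> A x) -> DCC A -> DCC B.
Proof. intros HBA HA [u [Hu Hd]]. apply HA. exists u. split; auto. Qed.

Lemma DCC_hasmin (A : R -> Prop) : DCC A -> HasMin A.
Proof.
  intros HA T HTA [x0 Hx0].
  apply NNPP; intro Hno.
  assert (Hstep : forall x : {x | T x}, {y : {y | T y} | proj1_sig y < proj1_sig x}).
  { intros [x Hx]. apply constructive_indefinite_description.
    apply NNPP; intro H2. apply Hno. exists x. split; auto. intros y Hy.
    apply Rnot_lt_le. intro Hlt. apply H2. exists (exist _ y Hy). simpl. exact Hlt. }
  set (h := fun x => proj1_sig (Hstep x)).
  set (s := nat_rect (fun _ => {x | T x}) (exist _ x0 Hx0) (fun _ p => h p)).
  assert (Hs : forall n, s (S n) = h (s n)) by reflexivity.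
  apply HA. exists (fun n => proj1_sig (s n)). split.
  - intro n. apply HTA. exact (proj2_sig (s n)).
  - intro n. rewrite Hs. unfold h. exact (proj2_sig (Hstep (s n))).
Qed.

Lemma dec_lt (u : nat -> R) : (forall n, u (S n) < u n) -> forall p q, (p < q)%nat -> u q < u p.
Proof. intros Hd p q Hpq. induction Hpq. apply Hd. specialize (Hd m). lra. Qed.

Lemma nondec_subseq (A : R -> Prop) (u : nat -> R) : DCC A -> (forall n, A (u n)) ->
  exists phi : nat -> nat, (forall n, (phi n < phi (S n))%nat) /\ forall n, u (phi n) <= u (phi (S n)).
Proof.
  intros HA Hu.
  assert (Hrec : forall N, exists n, (N <= n)%nat /\ forall m, (N <= m)%nat -> u n <= u m).
  { intro N. destruct (DCC_hasmin A HA (fun x => exists m, (N <= m)%nat /\ x = u m)) as [x [[n [Hn Hx]] Hmin]].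
    - intros x [m [_ ->]]. apply Hu.
    - exists (u N). exists N. split; auto.
    - exists n. split; auto. intros m Hm. subst x. apply Hmin. exists m. auto. }
  assert (r : forall N, {n | (N <= n)%nat /\ forall m, (N <= m)%nat -> u n <= u m}).
  { intro N. apply constructive_indefinite_description. apply Hrec. }
  set (phi := nat_rect (fun _ => nat) (proj1_sig (r O)) (fun _ p => proj1_sig (r (S p)))).
  assert (Hphi : forall n, phi (S n) = proj1_sig (r (S (phi n)))) by reflexivity.
  assert (Hr : forall N m, (proj1_sig (r N) <= m)%nat -> u (proj1_sig (r N)) <= u m).
  { intros N m Hm. destruct (proj2_sig (r N)) as [H1 H2]. apply H2. lia. }
  assert (Hgt : forall n, (phi n < phi (S n))%nat).
  { intro n. rewrite Hphi. destruct (proj2_sig (r (S (phi n)))) as [H1 _]. lia. }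
  assert (Hform : forall n, exists N, phi n = proj1_sig (r N)).
  { intro n; destruct n; [exists O | exists (S (phi n))]; reflexivity. }
  exists phi. split; auto.
  intro n. destruct (Hform n) as [N HN]. rewrite HN. apply Hr. rewrite <- HN. specialize (Hgt n). lia.
Qed.

Definition Psum (A B : R -> Prop) (t : R) := exists a b, A a /\ B b /\ t = a + b.

Lemma DCC_sum A B : DCC A -> DCC B -> DCC (Psum A B).
Proof.
  intros HA HB [t [Ht Hd]].
  assert (ca : forall n, {a | exists b, A a /\ B b /\ t n = a + b}).
  { intro n. apply constructive_indefinite_description. destruct (Ht n) as [a [b H]]. exists a, b. exact H. }
  set (a := fun n => proj1_sig (ca n)).
  assert (HaA : forall n, A (a n)).
  { intro n. destruct (proj2_sig (ca n)) as [b [H1 _]]. exact H1. }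
  assert (HbB : forall n, B (t n - a n)).
  { intro n. destruct (proj2_sig (ca n)) as [b [_ [H2 H3]]]. unfold a.
    replace (t n - proj1_sig (ca n)) with b by lra. exact H2. }
  destruct (nondec_subseq A a HA HaA) as [phi [Hphi Hmono]].
  apply HB. exists (fun n => t (phi n) - a (phi n)). split.
  - intro n. apply HbB.
  - intro n. pose proof (dec_lt t Hd _ _ (Hphi n)). pose proof (Hmono n). lra.
Qed.
Definition sumR (l : list R) := fold_right Rplus 0 l.

Definition SL (A : R -> Prop) (n : nat) (t : R) :=
  exists l, length l = n /\ Forall A l /\ t = sumR l.

Lemma DCC_SL A : DCC A -> forall n, DCC (SL A n).
Proof.
  intros HA n. induction n.
  - intros [u [Hu Hd]]. specialize (Hd 0%nat).
    destruct (Hu 0%nat) as [l0 [L0 [_ E0]]]. destruct (Hu 1%nat) as [l1 [L1 [_ E1]]].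
    destruct l0; [|discriminate]. destruct l1; [|discriminate]. simpl in *. unfold sumR in *; simpl in *. lra.
  - apply DCC_sub with (Psum A (SL A n)). 2: apply DCC_sum; auto.
    intros x [l [Hl [HF Hx]]]. destruct l as [|a l]; [discriminate|]. inversion HF; subst.
    exists a, (sumR l). split; auto. split; [|reflexivity]. exists l. simpl in Hl. split; [lia|auto].
Qed.

Lemma DCC_add0 A : (forall x, A x -> 0 <= x) -> DCC A -> DCC (fun x => A x \/ x = 0).
Proof.
  intros Hpos HA [u [Hu Hd]]. apply HA. exists (fun n => u (S n)). split.
  - intro n. destruct (Hu (S n)) as [H|H]; auto. exfalso. specialize (Hd (S n)).
    destruct (Hu (S (S n))) as [H'|H']. apply Hpos in H'. lra. lra.
  - intro n. apply Hd.
Qed.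

Lemma minmax_finite (A : R -> Prop) : HasMin A -> HasMax A -> finite_set A.
Proof.
  intros Hmin Hmax.
  assert (Hall : forall x, A x -> finite_set (fun y => A y /\ x <= y)).
  { apply NNPP. intro Hn.
    apply not_all_ex_not in Hn. destruct Hn as [x Hx].
    destruct (Hmax (fun x => A x /\ ~ finite_set (fun y => A y /\ x <= y))) as [z [[Az Hz] Hzmax]].
    - intros w [Aw _]; exact Aw.
    - exists x. apply imply_to_and in Hx. exact Hx.
    - apply Hz.
      destruct (classic (exists y, A y /\ z < y)) as [[y0 Hy0]|Hne].
      + destruct (Hmin (fun y => A y /\ z < y)) as [y [[Ay Hzy] Hymin]].
        * intros w [Aw _]; exact Aw.
        * exists y0; exact Hy0.
        * assert (Hfy : finite_set (fun w => A w /\ y <= w)).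
          { apply NNPP. intro Hnf. specialize (Hzmax y (conj Ay Hnf)). lra. }
          destruct Hfy as [l Hl]. exists (z :: l). intros w [Aw Hzw].
          destruct (Rle_lt_or_eq_dec _ _ Hzw) as [Hlt|Heq].
          -- right. apply Hl. split; [exact Aw|]. apply Hymin. split; auto.
          -- left. auto.
      + exists (z :: nil). intros w [Aw Hzw]. destruct (Rle_lt_or_eq_dec _ _ Hzw) as [Hlt|Heq].
        * exfalso. apply Hne. exists w. auto.
        * left. auto. }
  destruct (classic (exists x, A x)) as [Hne|He].
  - destruct (Hmin A (fun x H => H) Hne) as [x0 [Ax0 H0]].
    destruct (Hall x0 Ax0) as [l Hl]. exists l. intros x Ax. apply Hl. auto.
  - exists nil. intros x Ax. apply He. eauto.
Qed.

Lemma finite_sub (A B : R -> Prop) : (forall x, B x -> A x) -> finite_set A -> finite_set B.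
Proof. intros H [l Hl]. exists l. auto. Qed.

Lemma finite_union_nat (P : nat -> R -> Prop) (n : nat) : (forall i, (i < n)%nat -> finite_set (P i)) ->
  finite_set (fun x => exists i, (i < n)%nat /\ P i x).
Proof.
  induction n; intros H.
  - exists nil. intros x [i [Hi _]]. lia.
  - destruct IHn as [l1 Hl1]. { intros i Hi. apply H. lia. }
    destruct (H n (Nat.lt_succ_diag_r n)) as [l2 Hl2].
    exists (l1 ++ l2). intros x [i [Hi Px]]. apply in_or_app.
    destruct (Nat.eq_dec i n) as [->|Hne]. right; auto. left. apply Hl1. exists i. split; [lia|auto].
Qed.

Lemma finite_union_list (P : R -> R -> Prop) (L : list R) : (forall j, In j L -> finite_set (P j)) ->
  finite_set (fun x => exists j, In j L /\ P j x).
Proof.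
  induction L as [|a L IH]; intros H.
  - exists nil. intros x [j [[] _]].
  - destruct IH as [l1 Hl1]. { intros j Hj. apply H. right; auto. }
    destruct (H a (or_introl eq_refl)) as [l2 Hl2].
    exists (l1 ++ l2). intros x [j [[->|Hj] Px]]; apply in_or_app. right; auto. left. apply Hl1. eauto.
Qed.

Lemma piece_finite (I G : R -> Prop) (al be : R) : DCC I -> DCC G -> 0 < be ->
  finite_set (fun c => I c /\ exists g, G g /\ c = al - be * g).
Proof.
  intros HI HG Hbe. apply minmax_finite.
  - intros T HT Hne. apply (DCC_hasmin I HI); auto. intros x Hx. apply HT; auto.
  - intros T HT [x0 Hx0].
    destruct (DCC_hasmin G HG (fun g => G g /\ T (al - be * g))) as [g0 [[Gg0 Tg0] Hg0]].
    + intros g [Hg _]; exact Hg.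
    + destruct (HT x0 Hx0) as [_ [g [Gg Hx]]]. exists g. subst x0. auto.
    + exists (al - be * g0). split; auto. intros y Ty.
      destruct (HT y Ty) as [_ [g [Gg Hy]]]. subst y.
      assert (g0 <= g) by (apply Hg0; auto).
      assert (be * g0 <= be * g) by (apply Rmult_le_compat_l; lra). lra.
Qed.

Lemma sum_app l1 l2 : sumR (l1 ++ l2) = sumR l1 + sumR l2.
Proof. induction l1; unfold sumR in *; simpl; [ring|]. rewrite IHl1. ring. Qed.

Lemma sum_repeat0 n : sumR (repeat 0 n) = 0.
Proof. induction n; unfold sumR in *; simpl; [reflexivity|]. rewrite IHn. ring. Qed.

Lemma filter_pos (I : R -> Prop) : (forall x, I x -> 0 <= x) -> forall l, Forall I l ->
  exists l', Forall (fun x => I x /\ 0 < x) l' /\ sumR l' = sumR l.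
Proof.
  intros Hpos l HF. induction HF.
  - exists nil. split; auto.
  - destruct IHHF as [l' [H1 H2]]. destruct (Rle_lt_or_eq_dec _ _ (Hpos x H)) as [Hlt|Heq].
    + exists (x :: l'). split. constructor; auto. unfold sumR in *; simpl. rewrite H2. reflexivity.
    + exists l'. split; auto. unfold sumR in *; simpl. rewrite H2, <- Heq. ring.
Qed.

Lemma sum_ge (I : R -> Prop) eps : (forall x, I x -> 0 < x -> eps <= x) -> forall l,
  Forall (fun x => I x /\ 0 < x) l -> INR (length l) * eps <= sumR l.
Proof.
  intros He l HF. induction HF.
  - simpl. unfold sumR; simpl. lra.
  - destruct H as [H1 H2]. pose proof (He x H1 H2). simpl length. rewrite S_INR.
    unfold sumR in *; simpl. lra.
Qed.

Lemma Iplus_SL (I : R -> Prop) eps N : (forall x, I x -> 0 <= x) -> 0 < eps ->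
  (forall x, I x -> 0 < x -> eps <= x) -> 1 < INR N * eps ->
  forall g, Iplus I g -> SL (fun x => I x \/ x = 0) N g.
Proof.
  intros Hpos Heps He HN g [Hg|[[Hg0 Hg1] [l [_ [HF Hgl]]]]].
  - exists (repeat 0 N). split; [apply repeat_length|]. split.
    + apply Forall_forall. intros x Hx. apply repeat_spec in Hx. auto.
    + rewrite sum_repeat0. exact Hg.
  - destruct (filter_pos I Hpos l HF) as [l' [HF' Hs]].
    pose proof (sum_ge I eps He l' HF') as Hge.
    assert (Hlen : (length l' < N)%nat).
    { apply INR_lt. apply Rmult_lt_reg_r with eps; auto. unfold sumR in *. lra. }
    exists (l' ++ repeat 0 (N - length l')). split; [|split].
    + rewrite length_app, repeat_length. lia.
    + apply Forall_app. split.
      * eapply Forall_impl; [|exact HF']. intros x [Hx _]. auto.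
      * apply Forall_forall. intros x Hx. apply repeat_spec in Hx. auto.
    + rewrite sum_app, sum_repeat0, Hs. unfold sumR. lra.
Qed.
Definition piece (I : R -> Prop) (j : R) (m k m' : nat) (c : R) :=
  I c /\ (1 <= k)%nat /\ (1 <= m')%nat /\ exists g, Iplus I g /\
  c = (INR m * j - INR m + 1 - (INR m' - 1 + g) / INR m') / INR k.

Lemma piece_fin I j m k m' : DCC I -> DCC (Iplus I) -> finite_set (piece I j m k m').
Proof.
  intros HI HIp.
  destruct (le_lt_dec 1 k) as [hk|hk]; [|exists nil; intros c [_ [Hk _]]; lia].
  destruct (le_lt_dec 1 m') as [hm|hm]; [|exists nil; intros c [_ [_ [Hm _]]]; lia].
  assert (Hk : 0 < INR k) by (apply lt_0_INR; lia).
  assert (Hm : 0 < INR m') by (apply lt_0_INR; lia).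
  apply finite_sub with (fun c => I c /\ exists g, Iplus I g /\
     c = (INR m * j - INR m + 1 - (INR m' - 1) / INR m') / INR k - (/ (INR m' * INR k)) * g).
  - intros c [Ic [_ [_ [g [Hg Hc]]]]]. split; auto. exists g. split; auto. rewrite Hc. field. lra.
  - apply piece_finite; auto. apply Rinv_0_lt_compat. nra.
Qed.

Definition Qs (I : R -> Prop) (N : nat) (j c : R) := j <= 1 /\ I c /\
  exists k m m' g, (1 <= k)%nat /\ (1 <= m)%nat /\ (1 <= m')%nat /\ (k < N)%nat /\ (m' < N)%nat /\
  Iplus I g /\ INR m * (1 - j) <= 1 /\
  c = (INR m * j - INR m + 1 - (INR m' - 1 + g) / INR m') / INR k.

Lemma Qs_fin I N j : DCC I -> DCC (Iplus I) -> finite_set (Qs I N j).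
Proof.
  intros HI HIp.
  destruct (Rtotal_order j 1) as [Hlt|[Heq|Hgt]].
  - destruct (INR_unbounded (/ (1 - j))) as [M HM].
    assert (HM' : 1 < INR M * (1 - j)).
    { apply Rmult_lt_compat_r with (r := 1 - j) in HM; [|lra]. rewrite Rinv_l in HM; lra. }
    apply finite_sub with (fun c => exists m, (m < M)%nat /\
      (fun m c => exists k, (k < N)%nat /\
         (fun k c => exists m', (m' < N)%nat /\ piece I j m k m' c) k c) m c).
    + intros c [_ [Ic [k [m [m' [g [hk [hm [hm' [hkN [hmN [Hg [Hb Hc]]]]]]]]]]]]].
      exists m. split.
      * apply INR_lt. apply Rmult_lt_reg_r with (1 - j); lra.
      * exists k. split; auto. exists m'. split; auto. split; auto. split; auto. split; auto. exists g. auto.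
    + apply finite_union_nat. intros m _. apply finite_union_nat. intros k _.
      apply finite_union_nat. intros m' _. apply piece_fin; auto.
  - subst j.
    apply finite_sub with (fun c => exists k, (k < N)%nat /\
         (fun k c => exists m', (m' < N)%nat /\ piece I 1 1 k m' c) k c).
    + intros c [_ [Ic [k [m [m' [g [hk [hm [hm' [hkN [hmN [Hg [Hb Hc]]]]]]]]]]]]].
      exists k. split; auto. exists m'. split; auto. split; auto. split; auto. split; auto. exists g.
      split; auto. rewrite Hc. replace (INR m * 1 - INR m) with (INR 1 * 1 - INR 1) by (simpl; ring). reflexivity.
    + apply finite_union_nat. intros k _.
      apply finite_union_nat. intros m' _. apply piece_fin; auto.
  - exists nil. intros c [Hj _]. lra.
Qed.

Theorem lemma5p2 (I J0 : R -> Prop)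
  (hI01 : forall x, I x -> 0 <= x <= 1)
  (hIdcc : DCC I)
  (hJ01 : forall x, J0 x -> 0 <= x <= 1)
  (hJfin : finite_set J0) :
  finite_set (fun c => I c /\
    exists (k m : nat) (f : R), (1 <= k)%nat /\ (1 <= m)%nat /\ DI I f /\
      J0 ((INR m - 1 + f + INR k * c) / INR m)).
Proof.
  destruct hJfin as [LJ HLJ].
  destruct (classic (exists x, I x /\ 0 < x)) as [Hex|Hnex].
  2: { exists (0 :: nil). intros c [Ic _]. left. destruct (hI01 c Ic) as [H _].
       destruct (Rle_lt_or_eq_dec 0 c H) as [Hl|He]; [exfalso; apply Hnex; eauto | auto]. }
  destruct (DCC_hasmin I hIdcc (fun x => I x /\ 0 < x)) as [eps [[Ieps Heps0] Hepsmin]];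
    [intros x [H _]; exact H | exact Hex |].
  destruct (INR_unbounded (/ eps)) as [N HN].
  assert (HNe : 1 < INR N * eps).
  { apply Rmult_lt_compat_r with (r := eps) in HN; [|lra]. rewrite Rinv_l in HN; lra. }
  assert (HIp : DCC (Iplus I)).
  { apply DCC_sub with (SL (fun x => I x \/ x = 0) N).
    - apply (Iplus_SL I eps N).
      + intros x Hx; apply hI01; auto.
      + exact Heps0.
      + intros x Hx Hp. apply Hepsmin. auto.
      + exact HNe.
    - apply DCC_SL. apply DCC_add0; [intros x Hx; apply hI01; auto | exact hIdcc]. }
  apply finite_sub with (fun c => c = 0 \/ exists j, In j LJ /\ Qs I N j c).
  - intros c [Ic [k [m [f [hk [hm [[Hf1 [m' [g [hm' [Hg Hfe]]]]] HJ]]]]]]].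
    set (jj := (INR m - 1 + f + INR k * c) / INR m) in HJ.
    destruct (hJ01 _ HJ) as [Hj0 Hj1]. destruct (hI01 c Ic) as [Hc0 Hc1].
    assert (Hg01 : 0 <= g <= 1) by (destruct Hg as [H|[H _]]; lra).
    assert (Hmp : 1 <= INR m) by (apply (le_INR 1); auto).
    assert (Hkp : 1 <= INR k) by (apply (le_INR 1); auto).
    assert (Hm'p : 1 <= INR m') by (apply (le_INR 1); auto).
    assert (Ej : INR m * jj = INR m - 1 + f + INR k * c) by (unfold jj; field; lra).
    assert (Ef : INR m' * f = INR m' - 1 + g) by (rewrite Hfe; field; lra).
    destruct (Rle_lt_or_eq_dec 0 c Hc0) as [Hcp|Hc]; [|left; auto].
    right. exists jj. split; [apply HLJ; auto|].
    assert (Hf0 : 0 <= f) by nra.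
    assert (Hmj : INR m * jj <= INR m) by nra.
    assert (Hkc : INR k * c <= 1) by nra.
    assert (Hce : eps <= c) by (apply Hepsmin; auto).
    assert (Hkc2 : c <= INR k * c) by nra.
    split; [lra|]. split; [auto|].
    exists k, m, m', g. split; [auto|]. split; [auto|]. split; [auto|].
    split; [apply INR_lt; apply Rmult_lt_reg_r with eps; nra|].
    split; [apply INR_lt; apply Rmult_lt_reg_r with eps; nra|].
    split; [auto|]. split; [nra|].
    rewrite <- Hfe. unfold jj. field. lra.
  - destruct (finite_union_list (Qs I N) LJ) as [l Hl].
    + intros j _. apply Qs_fin; auto.
    + exists (0 :: l). intros c [->|H]; [left; reflexivity | right; apply Hl; auto].
Qed.
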